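(* Let $R$ be a commutative ring, $M$ an $R$-module, $y_1,\ldots,y_r\in R$, $i>0$ an integer, and $I\subseteq R$ an ideal with $I\supseteq(y_1,\ldots,y_r)$. Assume that $I\,H_i(y_A;M)=0$ for all $A\subseteq\{1,\ldots,r\}$. Then $I\,H_{i+1}(y_A;M)=0$ for all $A\subseteq\{1,\ldots,r\}$.
   Context: For $A\subseteq\{1,\ldots,r\}$, $y_A=\{y_j:j\in A\}$ and $H_i(y_A;M)$ denotes the $i$-th Koszul homology of $M$ with respect to the elements $y_A$. *)

(* Defs.v *)
From HB Require Import structures.
From mathcomp Require Import all_boot all_order all_algebra.
Set Implicit Arguments. Unset Strict Implicit. Unset Printing Implicit Defensive.
Import GRing.Theory.
Local Open Scope ring_scope.

Definition is_ideal (R : comPzRingType) (I : {pred R}) : Prop :=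
  0 \in I /\ (forall a u v, u \in I -> v \in I -> a * u + v \in I).

(* Koszul complex K(y_A; M): a chain of degree i is a function
   c : {set 'I_r} -> M (c S = coefficient of e_S), supported on subsets
   S of A with #|S| = i. *)
Definition kchain (R : comPzRingType) (M : lmodType R) (r : nat)
  (A : {set 'I_r}) (i : nat) (c : {set 'I_r} -> M) : Prop :=
  forall S, c S != 0 -> S \subset A /\ #|S| = i.

(* Koszul differential: d(e_S m) = sum_{j in S} (-1)^{#{k in S | k < j}} y_j e_{S\j} m,
   i.e. (d c) T = sum_{j notin T} (-1)^{#{k in T | k < j}} y_j c (j |: T). *)
Definition kdiff (R : comPzRingType) (M : lmodType R) (r : nat)
  (y : 'I_r -> R) (c : {set 'I_r} -> M) : {set 'I_r} -> M :=
  fun T => \sum_(j in ~: T)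
     ((-1) ^+ #|[set k in T | (k < j)%N]| * y j) *: c (j |: T).

Definition kcycle (R : comPzRingType) (M : lmodType R) (r : nat)
  (y : 'I_r -> R) (A : {set 'I_r}) (i : nat) (z : {set 'I_r} -> M) : Prop :=
  @kchain R M r A i z /\ kdiff y z = (fun _ => 0).

Definition kboundary (R : comPzRingType) (M : lmodType R) (r : nat)
  (y : 'I_r -> R) (A : {set 'I_r}) (i : nat) (z : {set 'I_r} -> M) : Prop :=
  exists b, @kchain R M r A i.+1 b /\ kdiff y b = z.

Definition ann_koszul_homology (R : comPzRingType) (M : lmodType R) (r : nat)
  (y : 'I_r -> R) (I : {pred R}) (A : {set 'I_r}) (i : nat) : Prop :=
  forall a (z : {set 'I_r} -> M), a \in I -> kcycle y A i z ->
    kboundary y A i (fun S => a *: z S).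

(* Main.v *)
Require Import Defs.
From mathcomp Require Import all_boot all_order all_algebra.
From Stdlib Require Import FunctionalExtensionality.
Set Implicit Arguments. Unset Strict Implicit. Unset Printing Implicit Defensive.
Import GRing.Theory.
Local Open Scope ring_scope.

Definition sg {R : comPzRingType} {r : nat} (T : {set 'I_r}) (k : 'I_r) : R :=
  (-1) ^+ #|[set m in T | (m < k)%N]|.

Definition contr {R : comPzRingType} {M : lmodType R} {r : nat} (k : 'I_r)
  (c : {set 'I_r} -> M) : {set 'I_r} -> M :=
  fun T => if k \in T then 0 else (sg T k : R) *: c (k |: T).

Definition wedge {R : comPzRingType} {M : lmodType R} {r : nat} (k : 'I_r)
  (c : {set 'I_r} -> M) : {set 'I_r} -> M :=
  fun S => if k \in S then (sg (S :\ k) k : R) *: c (S :\ k) else 0.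

Lemma sg_sq (R : comPzRingType) r (T : {set 'I_r}) k : (sg T k : R) * sg T k = 1.
Proof. by rewrite /sg -exprD addnn -muln2 mulnC exprM sqrrN expr1n expr1n. Qed.

Lemma sgU (R : comPzRingType) r (T : {set 'I_r}) j k : j \notin T -> j != k ->
  (sg (j |: T) k : R) = sg T k * (-1) ^+ (j < k)%N.
Proof.
move=> jT jk; rewrite /sg -exprD; congr (_ ^+ _).
case: (ltnP j k) => jlt.
- have -> : [set m in j |: T | (m < k)%N] = j |: [set m in T | (m < k)%N].
    by apply/setP => m; rewrite !inE; case: eqP => // ->; rewrite jlt.
  by rewrite cardsU1 inE (negbTE jT) /= addnC.
- rewrite addn0; apply: eq_card => m; rewrite !inE.
  by case: eqP => [->|] //=; rewrite ltnNge jlt ?andbF.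
Qed.

Lemma sign_swap (R : comPzRingType) r (j k : 'I_r) : j != k ->
  ((-1) ^+ (j < k)%N : R) = - (-1) ^+ (k < j)%N.
Proof.
move=> jk; case: (ltngtP j k) => h /=.
- by rewrite expr1 expr0.
- by rewrite expr1 expr0 opprK.
- by move/val_inj: h => h; rewrite h eqxx in jk.
Qed.


Lemma kdiff_contr (R : comPzRingType) (M : lmodType R) r (y : 'I_r -> R)
  (c : {set 'I_r} -> M) T :
  kdiff y c T = \sum_j y j *: contr j c T.
Proof.
rewrite /kdiff [RHS](bigID (fun j => j \in T)) /=.
rewrite [X in _ = X + _]big1 ?add0r; last first.
  by move=> j jT; rewrite /contr jT scaler0.
apply: eq_big => [j|j jT]; first by rewrite inE.
by rewrite inE in jT; rewrite /contr (negbTE jT) scalerA mulrC.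
Qed.

Lemma contr_anti (R : comPzRingType) (M : lmodType R) r (j k : 'I_r)
  (c : {set 'I_r} -> M) T :
  contr k (contr j c) T = - contr j (contr k c) T.
Proof.
rewrite /contr.
have [->|jk] := eqVneq j k.
  by case: (k \in T); rewrite ?oppr0 // setU11 scaler0 oppr0.
case kT: (k \in T); case jT: (j \in T);
  rewrite ?oppr0 ?in_setU1 ?kT ?jT ?orbT ?scaler0 ?oppr0 //.
rewrite (negbTE jk) eq_sym (negbTE jk) /= !scalerA.
rewrite setUCA -scaleNr; congr (_ *: _).
rewrite (@sgU _ _ T k j) ?kT 1?eq_sym // (@sgU _ _ T j k) ?jT //.
by rewrite (sign_swap _ jk) !mulrN opprK mulrCA.
Qed.

Lemma setU1D1C r (j l : 'I_r) (T : {set 'I_r}) : j != l -> (j |: T) :\ l = j |: (T :\ l).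
Proof.
move=> jl; apply/setP => m; rewrite !inE.
by case: (eqVneq m j) => [->|] //=; rewrite jl.
Qed.

Lemma contr_sum (R : comPzRingType) (M : lmodType R) r (k : 'I_r)
  (F : 'I_r -> {set 'I_r} -> M) T :
  contr k (fun S => \sum_j F j S) T = \sum_j contr k (F j) T.
Proof.
rewrite /contr; case: (k \in T); first by rewrite big1.
by rewrite scaler_sumr.
Qed.

Lemma contr_scale (R : comPzRingType) (M : lmodType R) r (k : 'I_r) (a : R)
  (c : {set 'I_r} -> M) T :
  contr k (fun S => a *: c S) T = a *: contr k c T.
Proof. by rewrite /contr; case: (k \in T); rewrite ?scaler0 // !scalerA mulrC. Qed.

Lemma contr_add (R : comPzRingType) (M : lmodType R) r (k : 'I_r)
  (c1 c2 : {set 'I_r} -> M) T :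
  contr k (fun S => c1 S + c2 S) T = contr k c1 T + contr k c2 T.
Proof. by rewrite /contr; case: (k \in T); rewrite ?addr0 // scalerDr. Qed.

Lemma contr_opp (R : comPzRingType) (M : lmodType R) r (k : 'I_r)
  (c : {set 'I_r} -> M) T :
  contr k (fun S => - c S) T = - contr k c T.
Proof. by rewrite /contr; case: (k \in T); rewrite ?oppr0 // scalerN. Qed.

Lemma wedge_sum (R : comPzRingType) (M : lmodType R) r (k : 'I_r)
  (F : 'I_r -> {set 'I_r} -> M) T :
  wedge k (fun S => \sum_j F j S) T = \sum_j wedge k (F j) T.
Proof.
rewrite /wedge; case: (k \in T); last by rewrite big1.
by rewrite scaler_sumr.
Qed.

Lemma wedge_scale (R : comPzRingType) (M : lmodType R) r (k : 'I_r) (a : R)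
  (c : {set 'I_r} -> M) T :
  wedge k (fun S => a *: c S) T = a *: wedge k c T.
Proof. by rewrite /wedge; case: (k \in T); rewrite ?scaler0 // !scalerA mulrC. Qed.

Lemma kdiff_add (R : comPzRingType) (M : lmodType R) r (y : 'I_r -> R)
  (c1 c2 : {set 'I_r} -> M) T :
  kdiff y (fun S => c1 S + c2 S) T = kdiff y c1 T + kdiff y c2 T.
Proof. by rewrite /kdiff -big_split; apply: eq_bigr => j _; rewrite scalerDr. Qed.

Lemma kdiff_opp (R : comPzRingType) (M : lmodType R) r (y : 'I_r -> R)
  (c : {set 'I_r} -> M) T :
  kdiff y (fun S => - c S) T = - kdiff y c T.
Proof. by rewrite /kdiff -sumrN; apply: eq_bigr => j _; rewrite scalerN. Qed.

Lemma kdiff_scale (R : comPzRingType) (M : lmodType R) r (y : 'I_r -> R) (a : R)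
  (c : {set 'I_r} -> M) T :
  kdiff y (fun S => a *: c S) T = a *: kdiff y c T.
Proof. by rewrite /kdiff scaler_sumr; apply: eq_bigr => j _; rewrite !scalerA mulrC. Qed.

Lemma kdiff_zero (R : comPzRingType) (M : lmodType R) r (y : 'I_r -> R) T :
  kdiff y (fun _ : {set 'I_r} => (0 : M)) T = 0.
Proof. by rewrite /kdiff big1 // => j _; rewrite scaler0. Qed.

Lemma kdiff_ext (R : comPzRingType) (M : lmodType R) r (y : 'I_r -> R)
  (c1 c2 : {set 'I_r} -> M) : (forall S, c1 S = c2 S) -> forall T,
  kdiff y c1 T = kdiff y c2 T.
Proof. by move=> e T; rewrite /kdiff; apply: eq_bigr => j _; rewrite e. Qed.

Lemma contr_kdiff (R : comPzRingType) (M : lmodType R) r (y : 'I_r -> R) k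
  (c : {set 'I_r} -> M) T :
  contr k (kdiff y c) T = - kdiff y (contr k c) T.
Proof.
have -> : kdiff y c = fun S => \sum_j y j *: contr j c S.
  by apply: functional_extensionality => S; rewrite kdiff_contr.
rewrite contr_sum kdiff_contr -sumrN; apply: eq_bigr => j _.
by rewrite contr_scale contr_anti scalerN.
Qed.

Lemma antisym_sum (V : zmodType) r (F : 'I_r -> 'I_r -> V) :
  (forall j l, F j l = - F l j) -> (forall j, F j j = 0) ->
  \sum_j \sum_l F j l = 0.
Proof.
move=> Fa F0.
pose G (j l : 'I_r) := if (j < l)%N then F j l else 0.
have FG j l : F j l = G j l - G l j.
  rewrite /G; case: (ltngtP j l) => h.
  - by rewrite subr0.
  - by rewrite sub0r -Fa.
  - by move/val_inj: h => ->; rewrite F0 subrr.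
under eq_bigr => j _ do under eq_bigr => l _ do rewrite FG.
under eq_bigr => j _ do rewrite sumrB.
by rewrite sumrB [X in _ - X]exchange_big subrr.
Qed.

Lemma contr_same (R : comPzRingType) (M : lmodType R) r (k : 'I_r)
  (c : {set 'I_r} -> M) T : contr k (contr k c) T = 0.
Proof. by rewrite /contr setU11; case: (k \in T); rewrite ?scaler0. Qed.

Lemma kdiff_kdiff (R : comPzRingType) (M : lmodType R) r (y : 'I_r -> R)
  (c : {set 'I_r} -> M) T : kdiff y (kdiff y c) T = 0.
Proof.
rewrite kdiff_contr.
under eq_bigr => j _ do rewrite contr_kdiff kdiff_contr scalerN scaler_sumr.
rewrite sumrN antisym_sum ?oppr0 //.
  move=> j l; rewrite !scalerA contr_anti scalerN; congr (- (_ *: _)).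
  by rewrite mulrC.
by move=> j; rewrite contr_same !scaler0.
Qed.

Lemma contr_wedge (R : comPzRingType) (M : lmodType R) r (j l : 'I_r)
  (Y : {set 'I_r} -> M) T :
  contr j (wedge l Y) T + wedge l (contr j Y) T = if j == l then Y T else 0.
Proof.
rewrite /contr /wedge.
have [->|jl] := eqVneq j l.
  case lT: (l \in T).
    by rewrite add0r setD11 !scalerA sg_sq scale1r setD1K.
  by rewrite addr0 setU11 setU1K ?lT // !scalerA sg_sq scale1r.
case lT: (l \in T); last first.
  by case: (j \in T); rewrite ?in_setU1 ?(eq_sym l j) ?(negbTE jl) ?lT /= ?addr0 ?scaler0.
case jT: (j \in T).
  by rewrite in_setD1 jl jT add0r scaler0.
rewrite in_setU1 lT orbT in_setD1 jT andbF !scalerA setU1D1C // -scalerDl.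
have T' : T = l |: (T :\ l) by rewrite setD1K.
have lT' : l \notin T :\ l by rewrite setD11.
have jT' : j \notin T :\ l by rewrite in_setD1 jT andbF.
rewrite [in sg T j]T' (@sgU _ _ (T :\ l) l j) // 1?eq_sym //.
rewrite (@sgU _ _ (T :\ l) j l) // (sign_swap _ jl).
case: (l < j)%N; rewrite ?expr1 ?expr0 ?mulr1 ?mulrN1 ?opprK ?mulrN ?mulNr.
  by rewrite mulr1 [X in - X + _]mulrC addNr scale0r.
by rewrite [X in - X + _]mulrC addNr scale0r.
Qed.

Lemma kdiff_wedge (R : comPzRingType) (M : lmodType R) r (y : 'I_r -> R) l
  (Y : {set 'I_r} -> M) T :
  kdiff y (wedge l Y) T + wedge l (kdiff y Y) T = y l *: Y T.
Proof.
have -> : kdiff y Y = fun S => \sum_j y j *: contr j Y S.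
  by apply: functional_extensionality => S; rewrite kdiff_contr.
rewrite kdiff_contr wedge_sum -big_split /=.
rewrite (bigD1 l) //= big1 ?addr0.
  by rewrite wedge_scale -scalerDr contr_wedge eqxx.
move=> j jl; rewrite wedge_scale -scalerDr contr_wedge (negbTE jl).
by rewrite scaler0.
Qed.

Lemma contr_wedge_off (R : comPzRingType) (M : lmodType R) r (l : 'I_r)
  (Y : {set 'I_r} -> M) : (forall S : {set 'I_r}, l \in S -> Y S = 0) -> forall T,
  contr l (wedge l Y) T = Y T.
Proof.
move=> Y0 T; have := contr_wedge l l Y T; rewrite eqxx => <-.
rewrite [wedge l (contr l Y) T]/wedge; case lT: (l \in T); last by rewrite addr0.
by rewrite [contr l Y _]/contr setD11 setD1K // Y0 // !scaler0 addr0.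
Qed.

Lemma kchain_kdiff (R : comPzRingType) (M : lmodType R) r (y : 'I_r -> R)
  (A : {set 'I_r}) p (c : {set 'I_r} -> M) :
  kchain A p.+1 c -> kchain A p (kdiff y c).
Proof.
move=> hc T nz.
case: (boolP ((T \subset A) && (#|T| == p))) => [/andP[? /eqP ?] // | h].
case/negP: nz; apply/eqP; rewrite /kdiff big1 // => j; rewrite inE => jT.
case: (eqVneq (c (j |: T)) 0) => [->|/hc [sub cd]]; first by rewrite scaler0.
case/negP: h; rewrite cardsU1 jT add1n in cd; case: cd => ->.
by rewrite eqxx andbT (subset_trans _ sub) ?subsetUr.
Qed.

Lemma sg_scale_eq0 (R : comPzRingType) (M : lmodType R) r (T : {set 'I_r}) k (x : M) :
  (sg T k : R) *: x = 0 -> x = 0.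
Proof. by move=> h; rewrite -[x]scale1r -(@sg_sq R r T k) -scalerA h scaler0. Qed.

Lemma kchain_contr (R : comPzRingType) (M : lmodType R) r (A : {set 'I_r}) p k
  (c : {set 'I_r} -> M) : kchain A p.+1 c -> kchain (A :\ k) p (contr k c).
Proof.
move=> hc T; rewrite /contr; case kT: (k \in T); first by rewrite eqxx.
case: (eqVneq (c (k |: T)) 0) => [->|/hc [sub cd]]; first by rewrite scaler0 eqxx.
move=> _; rewrite cardsU1 kT add1n in cd; case: cd => ->; split => //.
apply/subsetP => m mT; rewrite in_setD1 (subsetP sub) ?andbT; last first.
  by rewrite in_setU1 mT orbT.
by apply: contraFN kT => /eqP <-.
Qed.

Lemma kchain_wedge (R : comPzRingType) (M : lmodType R) r (D E : {set 'I_r}) p k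
  (c : {set 'I_r} -> M) : kchain D p c -> k \in E -> D \subset E ->
  kchain E p.+1 (wedge k c).
Proof.
move=> hc kE DE S; rewrite /wedge; case kS: (k \in S); last by rewrite eqxx.
case: (eqVneq (c (S :\ k)) 0) => [->|/hc [sub cd]]; first by rewrite scaler0 eqxx.
move=> _; rewrite (cardsD1 k S) kS cd; split => //.
rewrite -(setD1K kS) subUset sub1set kE /=.
exact: subset_trans sub DE.
Qed.

Lemma kchain_sub (R : comPzRingType) (M : lmodType R) r (D E : {set 'I_r}) p
  (c : {set 'I_r} -> M) : D \subset E -> kchain D p c -> kchain E p c.
Proof. by move=> DE hc S /hc [sub ->]; split => //; apply: subset_trans sub DE. Qed.

Lemma kchain_add (R : comPzRingType) (M : lmodType R) r (A : {set 'I_r}) p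
  (c1 c2 : {set 'I_r} -> M) : kchain A p c1 -> kchain A p c2 ->
  kchain A p (fun S => c1 S + c2 S).
Proof.
move=> h1 h2 S; case: (eqVneq (c1 S) 0) => [->|/h1 //]; rewrite add0r.
exact: h2.
Qed.

Lemma kchain_opp (R : comPzRingType) (M : lmodType R) r (A : {set 'I_r}) p
  (c : {set 'I_r} -> M) : kchain A p c -> kchain A p (fun S => - c S).
Proof. by move=> h S; rewrite oppr_eq0; apply: h. Qed.

Lemma kchain_scale (R : comPzRingType) (M : lmodType R) r (A : {set 'I_r}) p a
  (c : {set 'I_r} -> M) : kchain A p c -> kchain A p (fun S => a *: c S).
Proof.
move=> h S; case: (eqVneq (c S) 0) => [->|/h //]; by rewrite scaler0 eqxx.
Qed.

Lemma kchain_zero (R : comPzRingType) (M : lmodType R) r (A : {set 'I_r}) p :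
  kchain A p (fun _ => (0 : M)).
Proof. by move=> S; rewrite eqxx. Qed.

Lemma kchain_off (R : comPzRingType) (M : lmodType R) r (D : {set 'I_r}) p k
  (c : {set 'I_r} -> M) : kchain D p c -> (forall T, contr k c T = 0) ->
  kchain (D :\ k) p c.
Proof.
move=> hc h0 S nz; have [sub cd] := hc S nz; split => //.
case kS: (k \in S).
  have := h0 (S :\ k); rewrite /contr setD11 setD1K // => /sg_scale_eq0 e.
  by rewrite e eqxx in nz.
apply/subsetP => m mS; rewrite in_setD1 (subsetP sub) // andbT.
by apply: contraFN kS => /eqP <-.
Qed.

Lemma contr_off (R : comPzRingType) (M : lmodType R) r (D : {set 'I_r}) p k
  (c : {set 'I_r} -> M) : kchain D p c -> k \notin D -> forall T, contr k c T = 0.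
Proof.
move=> hc kD T; rewrite /contr; case: (k \in T) => //.
case: (eqVneq (c (k |: T)) 0) => [->|/hc [sub _]]; first by rewrite scaler0.
by move: (subsetP sub k); rewrite setU11 => /(_ isT) kD'; rewrite kD' in kD.
Qed.

Lemma kchain_empty (R : comPzRingType) (M : lmodType R) r p
  (c : {set 'I_r} -> M) : kchain set0 p.+1 c -> forall S, c S = 0.
Proof.
move=> hc S; apply/eqP; apply/negP => /negP /hc [sub cd].
by move: sub; rewrite subset0 => /eqP e; rewrite e cards0 in cd.
Qed.

Lemma kchain_wedge_zero (R : comPzRingType) (M : lmodType R) r (D : {set 'I_r}) p k
  (c : {set 'I_r} -> M) : kchain D p c -> k \notin D ->
  forall S : {set 'I_r}, k \in S -> c S = 0.
Proof.
move=> hc kD S kS; apply/eqP; apply/negP => /negP /hc [sub _].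
by rewrite (subsetP sub k kS) in kD.
Qed.

Lemma contr_zero (R : comPzRingType) (M : lmodType R) r k T :
  contr k (fun _ : {set 'I_r} => (0 : M)) T = 0.
Proof. by rewrite /contr; case: (k \in T); rewrite ?scaler0. Qed.

Lemma wedge_zero (R : comPzRingType) (M : lmodType R) r k T :
  wedge k (fun _ : {set 'I_r} => (0 : M)) T = 0.
Proof. by rewrite /wedge; case: (k \in T); rewrite ?scaler0. Qed.

Lemma reduceR (R : comPzRingType) (M : lmodType R) r (y : 'I_r -> R) i
  (I : {pred R}) : (forall j, y j \in I) ->
  (forall A : {set 'I_r}, ann_koszul_homology M y I A i) ->
  forall n (E D : {set 'I_r}) (x U : {set 'I_r} -> M),
  #|E :\: D| = n -> D \subset E -> kchain D i x ->
  (forall T, kdiff y x T = 0) -> kchain E i.+1 U ->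
  (forall T, kdiff y U T = x T) ->
  exists X, kchain D i.+1 X /\ forall T, kdiff y X T = x T.
Proof.
move=> hyI hyp; elim=> [|n IH] E D x U hn DE hx cx hU dU.
  exists U; split => //; apply: kchain_sub hU.
  by rewrite -setD_eq0 -cards_eq0 hn.
have : E :\: D != set0 by rewrite -card_gt0 hn.
case/set0Pn => l; rewrite inE => /andP [lD lE].
pose E' := E :\ l.
pose U1 := contr l U.
have hU1 : kchain E' i U1 by apply: kchain_contr.
have cU1 : forall T, kdiff y U1 T = 0.
  move=> T; apply: oppr_inj; rewrite oppr0 -contr_kdiff.
  have -> : kdiff y U = x by apply: functional_extensionality.
  exact: (contr_off hx lD).
have [b [hb db]] := hyp E' (y l) U1 (hyI l)
   (conj hU1 (functional_extensionality _ _ cU1)).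
have lE' : l \notin E' by rewrite setD11.
have U1off := kchain_wedge_zero hU1 lE'.
apply: (IH E' D x (fun S => (U S - wedge l U1 S) + b S)) => //.
- have -> : E' :\: D = (E :\: D) :\ l.
    by apply/setP => m; rewrite !inE andbCA.
  by apply/eqP; rewrite -eqSS -hn (cardsD1 l (E :\: D)) inE lD lE.
- apply/subsetP => m mD; rewrite in_setD1 (subsetP DE) // andbT.
  by apply: contraNN lD => /eqP <-.
- apply: kchain_add; last exact: hb.
  apply: kchain_off.
    apply: kchain_add; first exact: hU.
    apply: kchain_opp; apply: kchain_wedge hU1 lE _.
    exact: subD1set.
  move=> T; rewrite contr_add contr_opp contr_wedge_off //.
  by rewrite subrr.
- move=> T; rewrite kdiff_add kdiff_add kdiff_opp dU db.
  have e := kdiff_wedge y l U1 T.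
  have k0 : kdiff y U1 = fun _ => 0 by apply: functional_extensionality.
  rewrite k0 wedge_zero addr0 in e.
  by rewrite e subrK.
Qed.

Lemma main_step (R : comPzRingType) (M : lmodType R) r (y : 'I_r -> R) i
  (I : {pred R}) : (forall j, y j \in I) ->
  (forall A : {set 'I_r}, ann_koszul_homology M y I A i) ->
  forall a (A : {set 'I_r}) (z : {set 'I_r} -> M), a \in I ->
  kchain A i.+1 z -> (forall T, kdiff y z T = 0) ->
  forall n, exists (D : {set 'I_r}) (w V : {set 'I_r} -> M), [/\ D \subset A, (#|D| <= #|A| - n)%N,
    kchain D i.+1 w, (forall T, kdiff y w T = 0) &
    kchain A i.+2 V /\ forall T, a *: z T = w T + kdiff y V T].
Proof.
move=> hyI hyp a A z aI hz cz; elim=> [|n IH].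
  exists A, (fun S => a *: z S), (fun _ => 0); split => //; last split.
  - by rewrite subn0.
  - exact: kchain_scale.
  - by move=> T; rewrite kdiff_scale cz scaler0.
  - exact: kchain_zero.
  - by move=> T; rewrite kdiff_zero addr0.
case: IH => D [w [V [DA cD hw cw [hV e]]]].
case: (set_0Vmem D) => [D0 | [k kD]].
  by exists D, w, V; split => //; rewrite D0 cards0.
pose D' := D :\ k.
pose w1 := contr k w.
have hw1 : kchain D' i w1 by apply: kchain_contr.
have cw1 : forall T, kdiff y w1 T = 0.
  move=> T; apply: oppr_inj; rewrite oppr0 -contr_kdiff.
  have -> : kdiff y w = fun _ => 0 by apply: functional_extensionality.
  exact: contr_zero.
pose zk := contr k z.
have hzk : kchain (A :\ k) i zk by apply: kchain_contr.
have czk : forall T, kdiff y zk T = 0.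
  move=> T; apply: oppr_inj; rewrite oppr0 -contr_kdiff.
  have -> : kdiff y z = fun _ => 0 by apply: functional_extensionality.
  exact: contr_zero.
have [b [hb db]] := hyp (A :\ k) a zk aI
   (conj hzk (functional_extensionality _ _ czk)).
have key : forall T, kdiff y (fun S => b S + contr k V S) T = w1 T.
  move=> T; rewrite kdiff_add db.
  have e' : (fun S => a *: z S) = (fun S => w S + kdiff y V S).
    by apply: functional_extensionality.
  have := f_equal (fun f => contr k f T) e'; rewrite /= contr_scale contr_add.
  rewrite contr_kdiff => ->.
  by rewrite subrK.
have D'A : D' \subset A :\ k by apply: setSD.
have [X [hX dX]] := @reduceR _ _ _ y i I hyI hyp _ (A :\ k) D' w1
  (fun S => b S + contr k V S) (erefl _) D'A hw1 cw1
  (kchain_add hb (kchain_contr hV)) key.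
have kD' : k \notin D' by rewrite setD11.
have kA : k \in A by apply: (subsetP DA).
have D'A' : D' \subset A by apply: subset_trans (subD1set D k) DA.
exists D', (fun S => w S + kdiff y (wedge k X) S), (fun S => V S - wedge k X S).
split.
- exact: D'A'.
- move: cD; rewrite (cardsD1 k D) kD add1n subnS.
  by case: (#|A| - n)%N.
- apply: kchain_off.
    apply: kchain_add; first exact: hw.
    by apply: kchain_kdiff; apply: kchain_wedge hX kD _; apply: subD1set.
  move=> T; rewrite contr_add contr_kdiff.
  rewrite (kdiff_ext _ (contr_wedge_off (kchain_wedge_zero hX kD'))) dX.
  by rewrite subrr.
- by move=> T; rewrite kdiff_add cw kdiff_kdiff addr0.
split.
- apply: kchain_add; first exact: hV.
  by apply: kchain_opp; apply: kchain_wedge hX kA D'A'.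
- move=> T; rewrite kdiff_add kdiff_opp e.
  by rewrite addrACA subrr addr0.
Qed.

Unset Implicit Arguments.

Theorem corollary2p2 (R : comPzRingType) (M : lmodType R) (r : nat)
  (y : 'I_r -> R) (i : nat) (I : {pred R}) :
  (0 < i)%N -> is_ideal I -> (forall j, y j \in I) ->
  (forall A : {set 'I_r}, ann_koszul_homology M y I A i) ->
  forall A : {set 'I_r}, ann_koszul_homology M y I A i.+1.
Proof.
move=> _ _ hyI hyp A a z aI [hz cz0].
have cz : forall T, kdiff y z T = 0 by move=> T; rewrite cz0.
have [D [w [V [DA cD hw cw [hV e]]]]] := main_step hyI hyp aI hz cz #|A|.
move: cD; rewrite subnn leqn0 cards_eq0 => /eqP D0.
rewrite D0 in hw.
exists V; split => //; apply: functional_extensionality => S.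
by rewrite e (kchain_empty hw) add0r.
Qed.
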